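(* In Algorithm MC (with $|b_j(v)|\le\deg(v)$ for all $v,j$ and $\alpha\in(0,1/4]$), for every $j\in[k]$ and every $i\ge0$ such that rounds $1,\dots,i$ have computed $r^1,\dots,r^i$, we have $\sum_{v\in V}|r^{\le i}_{v,j}|\cdot\deg(v)\le i\cdot\|b_j\|_1$.
   Context: Let $G=(V,E)$ be a unit-capacity undirected graph, $n=|V|\ge3$, every vertex of degree $\deg(v)\ge1$, each edge with a fixed arbitrary orientation; $B\in\mathbb R^{V\times E}$ is the incidence matrix (column $(u,v)$ has $+1$ in row $u$, $-1$ in row $v$, $0$ elsewhere). Algorithm MC takes $k\ge1$, $b=(b_1,\dots,b_k)\in\mathbb R^{V\times[k]}$ with $|b_j(v)|\le\deg(v)$ for all $v,j$, $\alpha\in(0,1/4]$ and an integer $T\ge1$. Set $w^1_{v,j,+}=w^1_{v,j,-}=1$. For $i=1,\dots,T$: (1) $\tilde w^i_{v,j,\circ}=w^i_{v,j,\circ}$ if $w^i_{v,j,\circ}\ge n$ and $0$ otherwise ($\circ\in\{+,-\}$); (2) $\tilde\phi^i_{v,j}=(\tilde w^i_{v,j,+}-\tilde w^i_{v,j,-})/\deg(v)$; (3) for each edge $(u,v)$ let $j^*$ maximize $|\tilde\phi^i_{u,j}-\tilde\phi^i_{v,j}|$ over $j\in[k]$ (ties arbitrary), set $f^i_{j^*}(u,v)=+1$ if $\tilde\phi^i_{u,j^*}>\tilde\phi^i_{v,j^*}$, $-1$ if $<$, $0$ otherwise, and $f^i_j(u,v)=0$ for $j\ne j^*$; (4) if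 $\sum_{j,v}\tilde\phi^i_{v,j}b_j(v)>\sum_{j,v}\tilde\phi^i_{v,j}(Bf^i_j)_v$, terminate; (5) $r^i_{v,j}=(b_j(v)-(Bf^i_j)_v)/\deg(v)$; (6) $w^{i+1}_{v,j,+}=w^i_{v,j,+}(1+\alpha r^i_{v,j})$, $w^{i+1}_{v,j,-}=w^i_{v,j,-}(1-\alpha r^i_{v,j})$. Write $r^{\le i}_{v,j}=\sum_{i'=1}^{i}r^{i'}_{v,j}$, with $r^{\le0}_{v,j}=0$. $\|b_j\|_1=\sum_v|b_j(v)|$. *)

(* Defs.v *)
(* Algorithm MC from the paper, specified relationally:
   an execution is any family (w, f, r) satisfying the update rules, which
   captures the arbitrary tie-breaking in step (3). *)
From HB Require Import structures.
From mathcomp Require Import all_boot all_order all_algebra.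
Set Implicit Arguments. Unset Strict Implicit. Unset Printing Implicit Defensive.
Import Order.TTheory GRing.Theory Num.Theory.
Local Open Scope ring_scope.

Section MC.
Variables (V E : finType) (src dst : E -> V).

(* G is a simple undirected graph: each edge e has fixed orientation
   (src e, dst e), no self-loops, no parallel edges. *)
Definition simple_graph : Prop :=
  (forall e, src e != dst e) /\
  (forall e1 e2, [set src e1; dst e1] = [set src e2; dst e2] -> e1 = e2).

Definition deg (v : V) : nat := #|[set e | (src e == v) || (dst e == v)]|.

Variable R : realFieldType.

Definition incid (v : V) (e : E) : R := (src e == v)%:R - (dst e == v)%:R.

Definition Bmul (g : E -> R) (v : V) : R := \sum_(e : E) incid v e * g e.

Variable k : nat.
(* weights w i v j s, with s = true for '+' and s = false for '-' *)
Variables (w : nat -> V -> 'I_k -> bool -> R)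
          (f : nat -> 'I_k -> E -> R)
          (r : nat -> V -> 'I_k -> R)
          (b : 'I_k -> V -> R) (alpha : R).

Definition wtil (i : nat) (v : V) (j : 'I_k) (s : bool) : R :=
  if (#|V|)%:R <= w i v j s then w i v j s else 0.

Definition phitil (i : nat) (v : V) (j : 'I_k) : R :=
  (wtil i v j true - wtil i v j false) / (deg v)%:R.

Definition flow_step (i : nat) : Prop :=
  forall e : E, exists jstar : 'I_k,
    (forall j : 'I_k,
       `|phitil i (src e) j - phitil i (dst e) j|
         <= `|phitil i (src e) jstar - phitil i (dst e) jstar|) /\
    f i jstar e = (if phitil i (src e) jstar > phitil i (dst e) jstar then 1
                   else if phitil i (src e) jstar < phitil i (dst e) jstar then -1
                   else 0) /\
    (forall j : 'I_k, j != jstar -> f i j e = 0).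

Definition no_stop (i : nat) : Prop :=
  ~ (\sum_(j : 'I_k) \sum_(v : V) phitil i v j * b j v >
     \sum_(j : 'I_k) \sum_(v : V) phitil i v j * Bmul (f i j) v).

Definition r_step (i : nat) : Prop :=
  forall v j, r i v j = (b j v - Bmul (f i j) v) / (deg v)%:R.

Definition w_step (i : nat) : Prop :=
  forall v j, w i.+1 v j true = w i v j true * (1 + alpha * r i v j) /\
              w i.+1 v j false = w i v j false * (1 - alpha * r i v j).

Definition w_init : Prop := forall v j s, w 1 v j s = 1.

Definition rounds_done (i : nat) : Prop :=
  w_init /\
  forall i', (1 <= i' <= i)%N ->
    flow_step i' /\ no_stop i' /\ r_step i' /\ w_step i'.

Definition rle (i : nat) (v : V) (j : 'I_k) : R :=
  \sum_(1 <= i' < i.+1) r i' v j.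

End MC.

(* Main.v *)
Require Import Defs.
From HB Require Import structures.
From mathcomp Require Import all_boot all_order all_algebra.
From mathcomp Require Import lra ring zify.
Import Order.TTheory GRing.Theory Num.Theory.
Local Open Scope ring_scope.

Lemma bern (R : realFieldType) (N : nat) (a : R) : 0 <= a ->
  (1 + a) ^+ N * (1 - N%:R * a) <= 1.
Proof.
move=> a0; elim: N => [|N IH]; first by rewrite expr0 mul0r subr0 mulr1.
have [h|h] := leP (1 - N.+1%:R * a) 0.
  apply: (@le_trans _ _ 0); last by [].
  by rewrite mulr_ge0_le0 // exprn_ge0 // addr_ge0.
rewrite exprSr -mulrA (le_trans _ IH) // ler_wpM2l ?exprn_ge0 ?addr_ge0 //.
rewrite -natr1 in h *.
have hN : 0 <= N%:R :> R by rewrite ler0n.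
nra.
Qed.
Lemma prod3 (R : realFieldType) (N : nat) (y : 'I_N -> R) :
  (forall i, 0 <= 1 + y i) -> 3 <= \prod_i (1 + y i) -> 1 / 4 <= \sum_i y i.
Proof.
move=> y0 hp; rewrite leNgt; apply/negP => hs.
have [N0|Npos] := posnP N.
  move: y y0 hp hs; rewrite N0 => y y0; rewrite big_ord0; lra.
have := @leif_AGM R _ predT (fun i => 1 + y i) (fun i _ => y0 i).
move=> /leifP.
rewrite cardT size_enum_ord.
set mu := (_ / _) => /= hAG.
have hprod : \prod_i (1 + y i) <= mu ^+ N.
  by move: hAG; case: ifP => _ /=; [move/eqP->|move/ltW].
have Nr : 0 < N%:R :> R by rewrite ltr0n.
have hmu : mu = 1 + (\sum_i y i) / N%:R.
  rewrite /mu big_split /= sumr_const card_ord.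
  by field; rewrite lt0r_neq0.
pose a := 1 / (4 * N%:R) : R.
have a0 : 0 <= a by rewrite /a divr_ge0 // mulr_ge0 // ltW.
have hNa : N%:R * a = 1 / 4 by rewrite /a; field; rewrite lt0r_neq0.
have hmu0 : 0 <= mu.
  rewrite /mu divr_ge0 ?ler0n //; apply: sumr_ge0 => i _; exact: y0.
have hmua : mu <= 1 + a.
  rewrite hmu /a lerD2l.
  have -> : 1 / (4 * N%:R) = (1/4) / N%:R :> R by field; rewrite lt0r_neq0.
  by rewrite ler_pM2r ?invr_gt0 //; exact: ltW.
have hpow : mu ^+ N <= (1 + a) ^+ N by rewrite lerXn2r // ?nnegrE //; lra.
have := @bern R N a a0; rewrite hNa => hb.
have hpos : 0 <= (1 + a) ^+ N by rewrite exprn_ge0 //; lra.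
lra.
Qed.
Lemma incid_le (V E : finType) (src dst : E -> V) (R : realFieldType) v e :
  `|incid src dst R v e| <= ((src e == v) || (dst e == v))%:R.
Proof.
by rewrite /incid; case: eqP; case: eqP => //= _ _;
  rewrite ?subrr ?normr0 ?subr0 ?sub0r ?normrN ?normr1.
Qed.

Lemma Bmul_le (V E : finType) (src dst : E -> V) (R : realFieldType)
  (g : E -> R) v : (forall e, `|g e| <= 1) ->
  `|Bmul src dst g v| <= (deg src dst v)%:R.
Proof.
move=> hg; rewrite /Bmul (le_trans (ler_norm_sum _ _ _)) //.
apply: (@le_trans _ _ (\sum_e ((src e == v) || (dst e == v))%:R)).
  apply: ler_sum => e _; rewrite normrM.
  rewrite -[X in _ <= X]mulr1 ler_pM //; exact: incid_le.
rewrite (eq_bigr (fun e => if (src e == v) || (dst e == v) then 1 else 0)); last first.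
  by move=> e _; case: ifP.
rewrite -big_mkcond /= sumr_const /deg cardsE.
by [].
Qed.

Lemma comb (V E : finType) (src dst : E -> V) (R : realFieldType)
  (x : V -> R) (g : E -> R) (phi : V -> R) :
  (forall e, src e != dst e) ->
  (forall e, g e = 0 \/ (g e = 1 /\ phi (dst e) < phi (src e)) \/
             (g e = -1 /\ phi (src e) < phi (dst e))) ->
  (forall v, 0 < phi v -> (deg src dst v)%:R <= x v) ->
  (forall v, phi v < 0 -> x v <= - (deg src dst v)%:R) ->
  \sum_v `|x v - Bmul src dst g v| <= \sum_v `|x v|.
Proof.
move=> hsd hg hpos hneg.
have hg1 : forall e, `|g e| <= 1.
  by move=> e; case: (hg e) => [->|[[-> _]|[-> _]]]; rewrite ?normr0 ?normrN ?normr1.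
pose c v e := let g' := incid src dst R v e * g e in
  if 0 < phi v then - g' else if phi v < 0 then g' else `|g'|.
have step1 : forall v, `|x v - Bmul src dst g v| <= `|x v| + \sum_e c v e.
  move=> v; have hB := Bmul_le _ _ src dst R g v hg1.
  have [hp|hn|h0] := ltrgt0P (phi v).
  - have hx := hpos v hp.
    rewrite /c hp /= sumrN -/(Bmul src dst g v).
    have := ler_norm (Bmul src dst g v).
    have hx0 : 0 <= x v by move: (normr_ge0 (Bmul src dst g v)); lra.
    move=> hle; have h : 0 <= x v - Bmul src dst g v by lra.
    by rewrite (ger0_norm hx0) (ger0_norm h).
  - have hx := hneg v hn.
    rewrite /c ltNge (ltW hn) hn /= -/(Bmul src dst g v).
    have := ler_norm (- Bmul src dst g v); rewrite normrN.
    have hx0 : x v <= 0 by move: (normr_ge0 (Bmul src dst g v)); lra.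
    move=> hle; have h : x v - Bmul src dst g v <= 0 by lra.
    rewrite (ler0_norm hx0) (ler0_norm h); lra.
  - rewrite /c h0 ltxx /=.
    apply: (le_trans (ler_normB _ _)); rewrite lerD2l.
    exact: ler_norm_sum.
have step2 : forall e, \sum_v c v e <= 0.
  move=> e; rewrite (bigD1 (src e)) //= (bigD1 (dst e)) /=; last by rewrite eq_sym.
  rewrite big1 ?addr0; last first.
    move=> v /andP[h1 h2]; rewrite /c /incid.
    rewrite eq_sym in h1; rewrite eq_sym in h2.
    by rewrite (negbTE h1) (negbTE h2) subrr mul0r oppr0 normr0; case: ifP => //; case: ifP.
  have hs : incid src dst R (src e) e = 1 by rewrite /incid eqxx eq_sym (negbTE (hsd e)) subr0.
  have hd : incid src dst R (dst e) e = -1 by rewrite /incid eqxx (negbTE (hsd e)) sub0r.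
  rewrite /c hs hd.
  case: (hg e) => [->|[[-> hlt]|[-> hlt]]].
  - by rewrite !mulr0 oppr0 normr0 !if_same addr0.
  - rewrite mul1r mulN1r normrN normr1.
    by have [hp|hn|h0] := ltrgt0P (phi (src e)); repeat (case: ifP => ?); lra.
  - rewrite mul1r mulN1r opprK normrN normr1.
    by have [hp|hn|h0] := ltrgt0P (phi (dst e)); repeat (case: ifP => ?); lra.
apply: (le_trans (ler_sum _ (fun v _ => step1 v))).
rewrite big_split /= exchange_big /= -[X in _ <= X]addr0 lerD2l.
by apply: sumr_le0 => e _; exact: step2.
Qed.

Section Main.
Variables (V E : finType) (src dst : E -> V) (R : realFieldType)
  (k : nat) (b : 'I_k -> V -> R) (alpha : R)
  (w : nat -> V -> 'I_k -> bool -> R) (f : nat -> 'I_k -> E -> R)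
  (r : nat -> V -> 'I_k -> R).

Local Notation D v := ((deg src dst v)%:R : R).

Lemma w_prod m : w_init w -> (forall t, (1 <= t <= m)%N -> w_step w r alpha t) ->
  forall v j, w m.+1 v j true = \prod_(1 <= t < m.+1) (1 + alpha * r t v j) /\
              w m.+1 v j false = \prod_(1 <= t < m.+1) (1 - alpha * r t v j).
Proof.
move=> hi; elim: m => [|m IH] hs v j.
  by rewrite !big_geq // !hi.
have [h1 h2] := IH (fun t ht => hs t (ltac:(lia))) v j.
have [h3 h4] := hs m.+1 (ltac:(lia)) v j.
by rewrite h3 h4 h1 h2 !(big_nat_recr m.+1).
Qed.

Lemma rle_S m v j : rle r m.+1 v j = rle r m v j + r m.+1 v j.
Proof. by rewrite /rle (big_nat_recr m.+1). Qed.

Lemma rle_ord m v j : rle r m v j = \sum_(i < m) r i.+1 v j.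
Proof. by rewrite /rle big_add1 /= big_mkord. Qed.

Lemma f_prop i : flow_step src dst w f i -> forall j e,
  f i j e = 0 \/ (f i j e = 1 /\ phitil src dst w i (dst e) j < phitil src dst w i (src e) j)
  \/ (f i j e = -1 /\ phitil src dst w i (src e) j < phitil src dst w i (dst e) j).
Proof.
move=> hf j e; have [js [_ [hjs hoth]]] := hf e.
case: (eqVneq j js) => [->|hne]; last by left; exact: hoth.
rewrite hjs; case: ifP => h; first by right; left.
case: ifP => h'; first by right; right.
by left.
Qed.
Arguments f_prop {i}.

Lemma r_bound t v j : (forall v, (1 <= deg src dst v)%N) ->
  (forall v j, `|b j v| <= D v) -> 0 < alpha -> alpha <= 1/4 ->
  flow_step src dst w f t -> r_step src dst f r b t ->
  `|alpha * r t v j| <= 1/2.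
Proof.
move=> hdeg hb ha0 ha1 hf hr.
have hD : 0 < D v by rewrite ltr0n; exact: hdeg.
have hg1 : forall e, `|f t j e| <= 1.
  by move=> e; case: (f_prop hf j e) => [->|[[-> _]|[-> _]]]; rewrite ?normr0 ?normrN ?normr1.
have hB := Bmul_le _ _ src dst R (f t j) v hg1.
have hrr : `|r t v j| <= 2.
  rewrite hr normrM normfV (gtr0_norm hD) ler_pdivrMr //.
  apply: (le_trans (ler_normB _ _)); move: (hb v j); lra.
rewrite normrM (gtr0_norm ha0).
have := normr_ge0 (r t v j); nra.
Qed.

Lemma wtil_ge0 i v j s : 0 <= wtil w i v j s.
Proof.
rewrite /wtil; case: ifP => // h; apply: le_trans h; exact: ler0n.
Qed.

Lemma phi_pos i v j : (forall v, (1 <= deg src dst v)%N) ->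
  0 < phitil src dst w i v j -> (#|V|)%:R <= w i v j true.
Proof.
move=> hdeg; have hD : 0 < D v by rewrite ltr0n; exact: hdeg.
rewrite /phitil pmulr_lgt0 ?invr_gt0 // subr_gt0 => h.
have := wtil_ge0 i v j false => h0.
case hc: ((#|V|)%:R <= w i v j true) => //.
have : wtil w i v j true = 0 by rewrite /wtil hc.
lra.
Qed.

Lemma phi_neg i v j : (forall v, (1 <= deg src dst v)%N) ->
  phitil src dst w i v j < 0 -> (#|V|)%:R <= w i v j false.
Proof.
move=> hdeg; have hD : 0 < D v by rewrite ltr0n; exact: hdeg.
rewrite /phitil pmulr_llt0 ?invr_gt0 // subr_lt0 => h.
have := wtil_ge0 i v j true => h0.
case hc: ((#|V|)%:R <= w i v j false) => //.
have : wtil w i v j false = 0 by rewrite /wtil hc.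
lra.
Qed.

Hypotheses (hdeg : forall v, (1 <= deg src dst v)%N)
  (hb : forall v j, `|b j v| <= D v) (ha0 : 0 < alpha) (ha1 : alpha <= 1/4)
  (hV : (3 <= #|V|)%N) (hwi : w_init w).

Lemma rle_sign m v j :
  (forall t, (1 <= t <= m)%N -> flow_step src dst w f t /\ r_step src dst f r b t
     /\ w_step w r alpha t) ->
  (0 < phitil src dst w m.+1 v j -> 1 <= rle r m v j) /\
  (phitil src dst w m.+1 v j < 0 -> rle r m v j <= -1).
Proof.
move=> hs.
have [hp hn] := w_prod m hwi (fun t ht => (hs t ht).2.2) v j.
have hV3 : 3 <= (#|V|)%:R :> R by rewrite (ler_nat R 3).
have hy : forall i : 'I_m, `|alpha * r i.+1 v j| <= 1/2.
  move=> i; have [h1 [h2 _]] := hs i.+1 (ltac:(case: i => /= i; lia)).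
  exact: (r_bound i.+1 v j hdeg hb ha0 ha1 h1 h2).
split => h.
- have := phi_pos m.+1 v j hdeg h; rewrite hp big_add1 /= big_mkord => hw.
  have := @prod3 R m (fun i : 'I_m => alpha * r i.+1 v j).
  rewrite -mulr_sumr -rle_ord => H.
  have : 1/4 <= alpha * rle r m v j.
    apply: H; last by lra.
    by move=> i; have := hy i; rewrite ler_norml; lra.
  by move=> h4; rewrite -(ler_pM2l ha0) mulr1; exact: le_trans ha1 h4.
- have := phi_neg m.+1 v j hdeg h; rewrite hn big_add1 /= big_mkord => hw.
  have := @prod3 R m (fun i : 'I_m => - (alpha * r i.+1 v j)).
  rewrite sumrN -mulr_sumr -rle_ord => H.
  have : 1/4 <= - (alpha * rle r m v j).
    apply: H; last by lra.
    by move=> i; have := hy i; rewrite ler_norml; lra.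
  by move=> h4; rewrite -(ler_pM2l ha0) mulrN1 lerNr; exact: le_trans ha1 h4.
Qed.



Lemma main_ind i j : rounds_done src dst w f r b alpha i ->
  (forall e, src e != dst e) -> forall m, (m <= i)%N ->
  \sum_v `|rle r m v j| * D v <= m%:R * \sum_v `|b j v|.
Proof.
move=> [_ hr] hsd; elim=> [|m IH] hm.
  rewrite mul0r big1 // => v _; rewrite /rle big_geq // normr0 mul0r //.
have hs : forall t, (1 <= t <= m)%N -> flow_step src dst w f t /\ r_step src dst f r b t
     /\ w_step w r alpha t.
  by move=> t ht; have [h1 [_ h2]] := hr t (ltac:(lia)).
have [hf [_ [hrs _]]] := hr m.+1 (ltac:(lia)).
pose x v := D v * rle r m v j.
have hc := comb _ _ src dst R x (f m.+1 j) (fun v => phitil src dst w m.+1 v j) hsd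
  (f_prop hf j).
have hD : forall v, 0 < D v by move=> v; rewrite ltr0n; exact: hdeg.
have hc' : \sum_v `|x v - Bmul src dst (f m.+1 j) v| <= \sum_v `|x v|.
  apply: hc => v h.
  - have := (rle_sign m v j hs).1 h => h1.
    by rewrite /x -[X in X <= _]mulr1 ler_wpM2l // ltW.
  - have := (rle_sign m v j hs).2 h => h1.
    by rewrite /x -mulrN1 ler_wpM2l // ltW.
have hx : \sum_v `|x v| = \sum_v `|rle r m v j| * D v.
  by apply: eq_bigr => v _; rewrite /x normrM (gtr0_norm (hD v)) mulrC.
have IH' := IH (ltnW hm).
have hstep : forall v, `|rle r m.+1 v j| * D v <=
    `|x v - Bmul src dst (f m.+1 j) v| + `|b j v|.
  move=> v; rewrite -[X in _ * X <= _](gtr0_norm (hD v)) -normrM.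
  have -> : rle r m.+1 v j * D v = (x v - Bmul src dst (f m.+1 j) v) + b j v.
    rewrite rle_S hrs /x; field; exact: lt0r_neq0.
  exact: ler_normD.
apply: (le_trans (ler_sum _ (fun v _ => hstep v))).
rewrite big_split /= -natr1 mulrDl mul1r lerD2r.
by rewrite (le_trans hc') // hx.
Qed.

End Main.

Theorem lemma2p14 (V E : finType) (src dst : E -> V) (R : realFieldType)
  (k : nat) (b : 'I_k -> V -> R) (alpha : R) (T : nat)
  (w : nat -> V -> 'I_k -> bool -> R) (f : nat -> 'I_k -> E -> R)
  (r : nat -> V -> 'I_k -> R) :
  simple_graph src dst ->
  (3 <= #|V|)%N ->
  (forall v, (1 <= deg src dst v)%N) ->
  (1 <= k)%N ->
  (forall v j, `|b j v| <= (deg src dst v)%:R) ->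
  0 < alpha -> alpha <= 1 / 4 ->
  (1 <= T)%N ->
  forall (j : 'I_k) (i : nat), (i <= T)%N ->
  rounds_done src dst w f r b alpha i ->
  \sum_(v : V) `|rle r i v j| * (deg src dst v)%:R
    <= i%:R * \sum_(v : V) `|b j v|.
Proof.
move=> [hsd _] hV hdeg _ hb ha0 ha1 _ j i _ hrd.
have hwi : w_init w by case: hrd.
exact: (@main_ind _ _ _ _ _ _ _ _ _ _ _ hdeg hb ha0 ha1 hV hwi i j hrd hsd i (leqnn i)).
Qed.
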